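(* Let $S$ be a group. Let $\{G_j\}_{j\in J}$ be a family of proper subgroups $G_j\subset S$ containing exactly one subgroup from each conjugacy class of proper non-normal subgroups of $S$, and let $\{N_m\}_{m\in M}$ be the family of all proper normal subgroups of $S$. Then for every left $S$-act $A$, the geometric equivalence class $[A]=\{B : B \text{ is an } S\text{-act}, B\overset{\triangle}{\sim} A\}$ has a representation of exactly one of the following three types: (i) $[A]=\big[\coprod_{k\in K}\overline{G_k}^{(\ast)2}\amalg\coprod_{t\in T}\overline{G_t}\amalg\coprod_{l\in L}\overline{N_l}\big]$ for some subsets $K,T\subseteq J$ with $K\cap T=\emptyset$ and $L\subseteq M$; (ii) $[A]=\big[\coprod_{k\in K}\overline{G_k}\amalg\coprod_{l\in L}\overline{N_l}\amalg z\big]$ for some $K\subseteq J$, $L\subseteq M$; (iii) $[A]=\big[\coprod_{k\in K}\overline{G_k}\amalg\coprod_{l\in L}\overline{N_l}\amalg z_1\amalg z_2\big]$ for some $K\subseteq J$, $L\subseteq M$. (That is, $A$ is geometrically equivalent to an $S$-act of one of these forms, and $[A]$ does not admit representations of two different types.)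
   Context: For a monoid $S$, a left $S$-act is a nonempty set $A$ with a map $S\times A\to A$, $(s,a)\mapsto sa$, such that $1a=a$ and $(st)a=s(ta)$; homomorphisms are maps $f$ with $f(sa)=sf(a)$. Coproducts $\amalg$ of $S$-acts are disjoint unions with the induced action. For a nonempty finite set $X$, $F_X=\coprod_{x\in X}S_x$ is the free $S$-act on $X$ (a disjoint union of copies of the left regular act ${}_SS$). For an $S$-act $G$ and a binary relation $T\subseteq F_X\times F_X$, let $T'_G=\{\mu:F_X\to G \text{ homomorphism} : T\subseteq \ker\mu\}$ and $T''_G=\bigcap_{\mu\in T'_G}\ker\mu$ (the empty intersection being $F_X\times F_X$). Two $S$-acts $G_1,G_2$ are geometrically equivalent, $G_1\overset{\triangle}{\sim}G_2$, iff $T''_{G_1}=T''_{G_2}$ for every nonempty finite $X$ and every relation $T\subseteq F_X\times F_X$. For a subgroup $H$ of a group $S$, $\overline{H}={}_SS/H$ is the $S$-act of left cosets $tH$ with $s\cdot tH=stH$. For an $S$-act $A$, $A^{(\ast)I}=\coprod_{i\in I}A_i$ with each $A_i=A$; in particular $A^{(\ast)2}=A\amalg A$. The symbols $z,z_1,z_2$ denote one-element $S$-acts. *)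

(* Defs.v *)
From Stdlib Require Import List FunctionalExtensionality PropExtensionality ProofIrrelevance.

Set Implicit Arguments.

Record Group := {
  gcar :> Type;
  gmul : gcar -> gcar -> gcar;
  gone : gcar;
  ginv : gcar -> gcar;
  gmulA : forall x y z, gmul x (gmul y z) = gmul (gmul x y) z;
  gmul1l : forall x, gmul gone x = x;
  gmul1r : forall x, gmul x gone = x;
  gmulVl : forall x, gmul (ginv x) x = gone;
  gmulVr : forall x, gmul x (ginv x) = gone
}.

Arguments gmul {g}.
Arguments gone {g}.
Arguments ginv {g}.

Section GroupFacts.
Variable S : Group.

Lemma ginv_uniq (x y : S) : gmul x y = gone -> y = ginv x.
Proof.
  intro H. rewrite <- (gmul1l S y), <- (gmulVl S x), <- gmulA, H, gmul1r. reflexivity.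
Qed.

Lemma ginvM (s t : S) : ginv (gmul s t) = gmul (ginv t) (ginv s).
Proof.
  symmetry; apply ginv_uniq.
  rewrite gmulA, <- (gmulA S s t), gmulVr, gmul1r, gmulVr. reflexivity.
Qed.

Lemma ginv1 : ginv (@gone S) = gone.
Proof. symmetry; apply ginv_uniq. apply gmul1l. Qed.

Definition subgroup (H : S -> Prop) : Prop :=
  H gone /\ (forall x y, H x -> H y -> H (gmul x y)) /\ (forall x, H x -> H (ginv x)).

Definition proper (H : S -> Prop) : Prop := exists x, ~ H x.

Definition normal (H : S -> Prop) : Prop :=
  forall g h, H h -> H (gmul (gmul g h) (ginv g)).

Definition conjugate (H1 H2 : S -> Prop) : Prop :=
  exists g, forall x, H1 x <-> H2 (gmul (gmul (ginv g) x) g).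

Definition same_set (H1 H2 : S -> Prop) : Prop := forall x, H1 x <-> H2 x.

End GroupFacts.

Arguments subgroup {S} H.
Arguments proper {S} H.
Arguments normal {S} H.
Arguments conjugate {S} H1 H2.
Arguments same_set {S} H1 H2.

(** * Left S-acts (the carrier may be empty here; nonemptiness is imposed
    separately where required). *)
Record act (S : Group) := {
  acar :> Type;
  aop : S -> acar -> acar;
  aop1 : forall a, aop gone a = a;
  aopM : forall s t a, aop (gmul s t) a = aop s (aop t a)
}.

Arguments aop {S a0} _ _ : rename.

Section Acts.
Variable S : Group.

Definition sum_op (A B : act S) (s : S) (p : A + B) : A + B :=
  match p with inl a => inl (aop s a) | inr b => inr (aop s b) end.

Lemma sum_op1 (A B : act S) p : @sum_op A B gone p = p.
Proof. destruct p; simpl; rewrite aop1; reflexivity. Qed.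

Lemma sum_opM (A B : act S) s t p :
  @sum_op A B (gmul s t) p = @sum_op A B s (@sum_op A B t p).
Proof. destruct p; simpl; rewrite aopM; reflexivity. Qed.

Definition act_sum (A B : act S) : act S :=
  {| acar := (A + B)%type; aop := @sum_op A B; aop1 := @sum_op1 A B;
     aopM := @sum_opM A B |}.

Definition sig_op (I : Type) (F : I -> act S) (s : S) (p : {i : I & F i})
  : {i : I & F i} := existT _ (projT1 p) (aop s (projT2 p)).

Lemma sig_op1 I (F : I -> act S) p : sig_op F gone p = p.
Proof. destruct p; unfold sig_op; simpl; rewrite aop1; reflexivity. Qed.

Lemma sig_opM I (F : I -> act S) s t p :
  sig_op F (gmul s t) p = sig_op F s (sig_op F t p).
Proof. destruct p; unfold sig_op; simpl; rewrite aopM; reflexivity. Qed.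

Definition act_coprod (I : Type) (F : I -> act S) : act S :=
  {| acar := {i : I & F i}; aop := sig_op F; aop1 := sig_op1 F;
     aopM := sig_opM F |}.

Definition act_point : act S :=
  {| acar := unit; aop := fun _ u => u; aop1 := fun _ => eq_refl;
     aopM := fun _ _ _ => eq_refl |}.

Definition act_double (A : act S) : act S := act_sum A A.

(** The act S/H of left cosets tH, a coset being represented as the subset
    {x | H (t^-1 x)} of S; s . tH = stH. *)
Definition coset_car (H : S -> Prop) : Type :=
  {C : S -> Prop | exists t : S, forall x, C x <-> H (gmul (ginv t) x)}.

Definition coset_op (H : S -> Prop) (s : S) (C : coset_car H) : coset_car H.
Proof.
  refine (exist _ (fun x => proj1_sig C (gmul (ginv s) x)) _).
  destruct C as [C [t Ht]]; simpl.
  exists (gmul s t). intro x. rewrite Ht, ginvM, gmulA. tauto.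
Defined.

Lemma coset_op1 H (C : coset_car H) : @coset_op H gone C = C.
Proof.
  destruct C as [C HC]. unfold coset_op. simpl.
  apply subset_eq_compat. apply functional_extensionality; intro x.
  rewrite ginv1, gmul1l. reflexivity.
Qed.

Lemma coset_opM H s t (C : coset_car H) :
  @coset_op H (gmul s t) C = @coset_op H s (@coset_op H t C).
Proof.
  destruct C as [C HC]. unfold coset_op. simpl.
  apply subset_eq_compat. apply functional_extensionality; intro x.
  rewrite ginvM, gmulA. reflexivity.
Qed.

Definition coset_act (H : S -> Prop) : act S :=
  {| acar := coset_car H; aop := @coset_op H; aop1 := @coset_op1 H;
     aopM := @coset_opM H |}.

(** Free act F_X = coproduct of copies of S indexed by X, carrier X * S,
    s.(x,t) = (x, s t). *)
Definition free_car (X : Type) : Type := (X * S)%type.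

Definition is_hom (X : Type) (B : act S) (mu : free_car X -> B) : Prop :=
  forall (s : S) (p : free_car X), mu (fst p, gmul s (snd p)) = aop s (mu p).

(** T''_B, as a relation on F_X *)
Definition closure (X : Type) (B : act S) (T : free_car X -> free_car X -> Prop)
  (p q : free_car X) : Prop :=
  forall mu : free_car X -> B, @is_hom X B mu ->
    (forall a b, T a b -> mu a = mu b) -> mu p = mu q.

Definition finite_type (X : Type) : Prop := exists l : list X, forall x, In x l.

Definition geom_equiv (B1 B2 : act S) : Prop :=
  forall (X : Type), finite_type X -> inhabited X ->
  forall (T : free_car X -> free_car X -> Prop) (p q : free_car X),
    closure B1 T p q <-> closure B2 T p q.

End Acts.

Arguments coset_act {S} H.

Definition sub_coprod (S : Group) (I : Type) (P : I -> Prop) (F : I -> act S) : act S :=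
  act_coprod (fun k : {i : I | P i} => F (proj1_sig k)).

Definition act_type_i (S : Group) (J M : Type) (G : J -> S -> Prop) (N : M -> S -> Prop)
  (K T : J -> Prop) (L : M -> Prop) : act S :=
  act_sum (act_sum (sub_coprod K (fun j => act_double (coset_act (G j))))
                   (sub_coprod T (fun j => coset_act (G j))))
          (sub_coprod L (fun m => coset_act (N m))).

Definition act_type_ii (S : Group) (J M : Type) (G : J -> S -> Prop) (N : M -> S -> Prop)
  (K : J -> Prop) (L : M -> Prop) : act S :=
  act_sum (act_sum (sub_coprod K (fun j => coset_act (G j)))
                   (sub_coprod L (fun m => coset_act (N m))))
          (act_point S).

Definition act_type_iii (S : Group) (J M : Type) (G : J -> S -> Prop) (N : M -> S -> Prop)
  (K : J -> Prop) (L : M -> Prop) : act S :=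
  act_sum (act_sum (act_sum (sub_coprod K (fun j => coset_act (G j)))
                            (sub_coprod L (fun m => coset_act (N m))))
                   (act_point S))
          (act_point S).

Arguments act_type_i {S J M} G N K T L.
Arguments act_type_ii {S J M} G N K L.
Arguments act_type_iii {S J M} G N K L.

(** [A] has a representation of type (i); the representative must be an
    S-act, i.e. nonempty. *)
Definition rep_type_i (S : Group) (J M : Type) (G : J -> S -> Prop) (N : M -> S -> Prop)
  (A : act S) : Prop :=
  exists (K T : J -> Prop) (L : M -> Prop),
    (forall j, K j -> T j -> False) /\
    inhabited (act_type_i G N K T L) /\
    geom_equiv A (act_type_i G N K T L).

Definition rep_type_ii (S : Group) (J M : Type) (G : J -> S -> Prop) (N : M -> S -> Prop)
  (A : act S) : Prop :=
  exists (K : J -> Prop) (L : M -> Prop), geom_equiv A (act_type_ii G N K L).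

Definition rep_type_iii (S : Group) (J M : Type) (G : J -> S -> Prop) (N : M -> S -> Prop)
  (A : act S) : Prop :=
  exists (K : J -> Prop) (L : M -> Prop), geom_equiv A (act_type_iii G N K L).

Arguments rep_type_i {S J M} G N A.
Arguments rep_type_ii {S J M} G N A.
Arguments rep_type_iii {S J M} G N A.

(* Main.v *)
Require Import Defs.
From Stdlib Require Import List FunctionalExtensionality PropExtensionality ProofIrrelevance ClassicalEpsilon Classical.

Lemma ginvK (S : Group) (x : S) : ginv (ginv x) = x.
Proof. symmetry. apply ginv_uniq. apply gmulVl. Qed.

Lemma gmulKV (S : Group) (p x : S) : gmul (gmul p x) (ginv x) = p.
Proof. rewrite <- gmulA, gmulVr, gmul1r. reflexivity. Qed.

Lemma gmulVK (S : Group) (p x : S) : gmul (gmul p (ginv x)) x = p.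
Proof. rewrite <- gmulA, gmulVl, gmul1r. reflexivity. Qed.

Ltac gsimpl := repeat progress (rewrite ?ginvM, ?ginvK, ?ginv1, ?gmulA, ?gmulVl, ?gmulVr, ?gmulKV, ?gmulVK, ?gmul1l, ?gmul1r).
Ltac gsimpl_in H := repeat progress (rewrite ?ginvM, ?ginvK, ?ginv1, ?gmulA, ?gmulVl, ?gmulVr, ?gmulKV, ?gmulVK, ?gmul1l, ?gmul1r in H).

Section ActLemmas.
Context {S : Group}.

Lemma aopV {P : act S} (k : S) (a : P) : aop (ginv k) (aop k a) = a.
Proof. rewrite <- aopM, gmulVl, aop1. reflexivity. Qed.
Lemma aopV' {P : act S} (k : S) (a : P) : aop k (aop (ginv k) a) = a.
Proof. rewrite <- aopM, gmulVr, aop1. reflexivity. Qed.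

Lemma aop_inj {P : act S} (k : S) (a b : P) : aop k a = aop k b -> a = b.
Proof. intro h. rewrite <- (aopV k a), h, aopV. reflexivity. Qed.

Lemma stab_trans {P : act S} (k s : S) (q : P) :
  aop s (aop k q) = aop k q <-> aop (gmul (gmul (ginv k) s) k) q = q.
Proof.
  split; intro h.
  - rewrite aopM, aopM, h, aopV. reflexivity.
  - rewrite <- h at 2. rewrite <- !aopM. f_equal. gsimpl. reflexivity.
Qed.

Definition exactp {P : act S} (H : S -> Prop) (q : P) := forall s, H s <-> aop s q = q.
Definition Ex (P : act S) (H : S -> Prop) := exists q : P, exactp H q.
Definition difforb {P : act S} (q1 q2 : P) := forall g, q2 <> aop g q1.
Definition Dx (P : act S) (H : S -> Prop) :=
  exists q1 q2 : P, exactp H q1 /\ exactp H q2 /\ difforb q1 q2.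
Definition stab {P : act S} (q : P) : S -> Prop := fun s => aop s q = q.

Lemma stab_exact {P : act S} (q : P) : exactp (stab q) q.
Proof. intro s. unfold stab. tauto. Qed.

Lemma stab_subgroup {P : act S} (q : P) : subgroup (stab q).
Proof.
  unfold stab. split; [|split].
  - apply aop1.
  - intros x y hx hy. rewrite aopM, hy, hx. reflexivity.
  - intros x hx. rewrite <- hx at 1. apply aopV.
Qed.

Lemma exact_trans {P : act S} {H} {q : P} {g} :
  exactp H q -> exactp (fun x => H (gmul (gmul (ginv g) x) g)) (aop g q).
Proof. intros hq s. rewrite stab_trans. apply hq. Qed.

Lemma Ex_conj {P : act S} H H' : conjugate H' H -> Ex P H -> Ex P H'.
Proof.
  intros [g hg] [q hq]. exists (aop g q). intro s. rewrite hg.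
  apply (exact_trans (g:=g) hq).
Qed.

Lemma difforb_trans {P : act S} (q1 q2 : P) g :
  difforb q1 q2 -> difforb (aop g q1) (aop g q2).
Proof.
  intros hd h e. apply (hd (gmul (gmul (ginv g) h) g)).
  apply (aop_inj g). rewrite e. rewrite <- !aopM. f_equal. gsimpl. reflexivity.
Qed.

Lemma Dx_conj {P : act S} H H' : conjugate H' H -> Dx P H -> Dx P H'.
Proof.
  intros [g hg] [q1 [q2 [h1 [h2 hd]]]]. exists (aop g q1), (aop g q2).
  split; [|split].
  - intro s. rewrite hg. apply (exact_trans (g:=g) h1).
  - intro s. rewrite hg. apply (exact_trans (g:=g) h2).
  - apply difforb_trans; assumption.
Qed.

Lemma conj_same (H H' : S -> Prop) : same_set H H' -> conjugate H H'.
Proof. intro h. exists gone. intro x. gsimpl. apply h. Qed.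

Lemma conj_sym (H H' : S -> Prop) : conjugate H H' -> conjugate H' H.
Proof.
  intros [g hg]. exists (ginv g). intro x. rewrite hg. gsimpl. tauto.
Qed.

Lemma conj_trans (H1 H2 H3 : S -> Prop) : conjugate H1 H2 -> conjugate H2 H3 -> conjugate H1 H3.
Proof.
  intros [g hg] [k hk]. exists (gmul g k). intro x. rewrite hg, hk. gsimpl. tauto.
Qed.

Lemma Ex_ext {P : act S} H H' : same_set H' H -> Ex P H -> Ex P H'.
Proof. intro h. apply Ex_conj. apply conj_same; assumption. Qed.
Lemma Dx_ext {P : act S} H H' : same_set H' H -> Dx P H -> Dx P H'.
Proof. intro h. apply Dx_conj. apply conj_same; assumption. Qed.

Lemma Dx_Ex {P : act S} H : Dx P H -> Ex P H.
Proof. intros [q1 [q2 [h1 _]]]. exists q1; exact h1. Qed.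

End ActLemmas.

Section Sep.
Context {S : Group}.

Definition orb {P : act S} (a : P) : P -> Prop := fun x => exists g, x = aop g a.
Definition rep {P : act S} (a : P) : P := epsilon (inhabits a) (orb a).

Lemma rep_spec {P : act S} (a : P) : exists g, rep a = aop g a.
Proof.
  unfold rep. apply (epsilon_spec (inhabits a) (orb a)).
  exists a. exists gone. rewrite aop1. reflexivity.
Qed.

Lemma orb_eq {P : act S} (a : P) g : orb (aop g a) = orb a.
Proof.
  apply functional_extensionality; intro x. apply propositional_extensionality.
  unfold orb. split.
  - intros [h e]. exists (gmul h g). rewrite aopM. exact e.
  - intros [h e]. exists (gmul h (ginv g)). rewrite aopM, aopV. exact e.
Qed.

Lemma rep_act {P : act S} (a : P) g : rep (aop g a) = rep a.
Proof.
  unfold rep. rewrite orb_eq. f_equal. apply proof_irrelevance.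
Qed.

Lemma rep_dec {P : act S} (a : P) : exists h, a = aop h (rep a).
Proof.
  destruct (rep_spec a) as [g e]. exists (ginv g). rewrite e, aopV. reflexivity.
Qed.

Lemma rep_rep {P : act S} (a : P) : rep (rep a) = rep a.
Proof. destruct (rep_spec a) as [g e]. rewrite e at 1. apply rep_act. Qed.

Definition is_ahom {P Q : act S} (f : P -> Q) := forall s a, f (aop s a) = aop s (f a).

Lemma orbit_ext {P Q : act S} (d : P -> Q)
  (hd : forall x s, aop s x = x -> aop s (d x) = d x) :
  exists phi : P -> Q, is_ahom phi /\
    forall a h, a = aop h (rep a) -> phi a = aop h (d (rep a)).
Proof.
  assert (wd : forall a h h', a = aop h (rep a) -> a = aop h' (rep a) ->
             aop h (d (rep a)) = aop h' (d (rep a))).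
  { intros a h h' e1 e2.
    assert (e : aop (gmul (ginv h') h) (rep a) = rep a).
    { rewrite aopM, <- e1. rewrite e2 at 1. rewrite aopV. reflexivity. }
    apply hd in e. rewrite aopM in e. rewrite <- e at 2. rewrite aopV'. reflexivity. }
  exists (fun a => aop (proj1_sig (constructive_indefinite_description _ (rep_dec a))) (d (rep a))).
  assert (key : forall a h, a = aop h (rep a) ->
     aop (proj1_sig (constructive_indefinite_description _ (rep_dec a))) (d (rep a)) = aop h (d (rep a))).
  { intros a h e. destruct (constructive_indefinite_description _ (rep_dec a)) as [h0 e0]. simpl.
    apply wd; assumption. }
  split.
  - intros s a. cbv beta. pose proof (rep_dec a) as hh. destruct hh as [h e].
    assert (e' : aop s a = aop (gmul s h) (rep (aop s a))) by (rewrite rep_act, aopM, <- e; reflexivity).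
    etransitivity. apply (key _ _ e'). rewrite rep_act. rewrite aopM. f_equal. symmetry. apply key. exact e.
  - exact key.
Qed.

Lemma two_lemma {P Q : act S}
  (dflt : forall x : P, exists q : Q, exactp (stab x) q)
  (c2 : forall H, subgroup H -> Dx P H ->
      Dx Q H \/ (Ex Q (fun _ => True) /\ proper H) \/ (normal H /\ proper H))
  (r1 r2 : P) (hr : difforb r1 r2) (h1 h2 : S) :
  exists q1 q2 : Q, (forall s, aop s r1 = r1 -> aop s q1 = q1) /\
                    (forall s, aop s r2 = r2 -> aop s q2 = q2) /\
                    aop h1 q1 <> aop h2 q2.
Proof.
  destruct (classic (conjugate (stab r1) (stab r2))) as [[k hk] | hnc].
  - assert (hD : Dx P (stab r1)).
    { exists r1, (aop k r2). split; [|split].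
      + apply stab_exact.
      + intro s. rewrite hk. rewrite stab_trans. unfold stab. tauto.
      + intros g e. apply (hr (gmul (ginv k) g)). rewrite aopM, <- e, aopV. reflexivity. }
    destruct (c2 _ (stab_subgroup r1) hD) as [[q1 [q2 [e1 [e2 hd]]]] | [[[z hz] hp] | [hn hp]]].
    + exists q1, (aop (ginv k) q2). split; [|split].
      * intros s hs. apply e1. exact hs.
      * intros s hs. rewrite stab_trans. apply e2. apply hk. gsimpl. exact hs.
      * intro e. apply (hd (gmul (gmul k (ginv h2)) h1)).
        apply (aop_inj (gmul h2 (ginv k))). rewrite <- !aopM. rewrite <- aopM in e. rewrite <- e.
        f_equal. gsimpl. reflexivity.
    + destruct (dflt r2) as [q2 e2].
      exists z, q2. split; [|split].
      * intros s _. apply hz. exact I.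
      * intros s hs. apply e2. exact hs.
      * intro e. destruct hp as [y hy]. apply hy.
        assert (hz2 : q2 = z).
        { apply (aop_inj h2). rewrite <- e. rewrite (proj1 (hz h2) I), (proj1 (hz h1) I). reflexivity. }
        apply hk. apply e2. rewrite hz2. apply hz. exact I.
    + destruct hp as [y hy]. destruct (dflt r1) as [q e1].
      exists q, (aop (gmul (gmul (ginv h2) h1) y) q). split; [|split].
      * intros s hs. apply e1. exact hs.
      * intros s hs. rewrite stab_trans. apply e1.
        assert (hs' : stab r1 (gmul (gmul k s) (ginv k))).
        { apply hk. gsimpl. exact hs. }
        pose proof (hn (gmul (ginv (gmul (gmul (ginv h2) h1) y)) (ginv k)) _ hs') as hh.
        revert hh. gsimpl. tauto.
      * intro e. apply hy. apply e1. apply (aop_inj h1). rewrite e. rewrite <- !aopM. f_equal. gsimpl. reflexivity.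
  - destruct (dflt r1) as [q1 e1]. destruct (dflt r2) as [q2 e2].
    exists q1, q2. split; [|split].
    + intros s hs. apply e1. exact hs.
    + intros s hs. apply e2. exact hs.
    + intro e. apply hnc. exists (gmul (ginv h1) h2). intro x.
      rewrite (e1 x), (e2 _). 
      assert (eq1 : q1 = aop (gmul (ginv h1) h2) q2).
      { rewrite aopM, <- e, aopV. reflexivity. }
      rewrite eq1. rewrite stab_trans. tauto.
Qed.

End Sep.

Section LeSep.
Context {S : Group}.

Definition C1 (P Q : act S) := forall H, subgroup H -> Ex P H -> Ex Q H.
Definition C2 (P Q : act S) := forall H, subgroup H -> Dx P H ->
      Dx Q H \/ (Ex Q (fun _ => True) /\ proper H) \/ (normal H /\ proper H).

Lemma sep {P Q : act S} (c1 : C1 P Q) (c2 : C2 P Q) (a1 a2 : P) (hne : a1 <> a2) :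
  exists phi : P -> Q, is_ahom phi /\ phi a1 <> phi a2.
Proof.
  assert (dflt : forall x : P, exists q : Q, exactp (stab x) q).
  { intro x. apply c1. apply stab_subgroup. exists x. apply stab_exact. }
  destruct (rep_dec a1) as [h1 e1]. destruct (rep_dec a2) as [h2 e2].
  set (df := fun x : P => proj1_sig (constructive_indefinite_description _ (dflt x))).
  assert (hdf : forall x, exactp (stab x) (df x)).
  { intro x. unfold df. destruct (constructive_indefinite_description _ (dflt x)) as [q hq]. exact hq. }
  destruct (classic (rep a1 = rep a2)) as [er | ner].
  - destruct (orbit_ext df (fun x s hs => proj1 (hdf x s) hs)) as [phi [hphi hv]].
    exists phi. split; [exact hphi|]. intro e.
    rewrite (hv a1 h1 e1), (hv a2 h2 e2) in e. rewrite <- er in e.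
    apply hne. rewrite e1, e2, <- er.
    assert (hs : aop (gmul (ginv h2) h1) (df (rep a1)) = df (rep a1)).
    { rewrite aopM, e, aopV. reflexivity. }
    apply (hdf (rep a1)) in hs. unfold stab in hs. rewrite aopM in hs.
    rewrite <- hs at 2. rewrite aopV'. reflexivity.
  - assert (hd : difforb (rep a1) (rep a2)).
    { intros g e. apply ner. rewrite <- (rep_rep a2), e, rep_act, rep_rep. reflexivity. }
    destruct (two_lemma dflt c2 _ _ hd h1 h2) as [q1 [q2 [hq1 [hq2 hq]]]].
    set (d := fun x => if excluded_middle_informative (x = rep a1) then q1
                       else if excluded_middle_informative (x = rep a2) then q2 else df x).
    assert (hdd : forall x s, aop s x = x -> aop s (d x) = d x).
    { intros x s hs. unfold d.
      destruct (excluded_middle_informative (x = rep a1)) as [ex|ex].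
      - subst x. apply hq1. exact hs.
      - destruct (excluded_middle_informative (x = rep a2)) as [ex2|ex2].
        + subst x. apply hq2. exact hs.
        + apply (hdf x). exact hs. }
    destruct (orbit_ext d hdd) as [phi [hphi hv]].
    exists phi. split; [exact hphi|].
    rewrite (hv a1 h1 e1), (hv a2 h2 e2). unfold d.
    destruct (excluded_middle_informative (rep a1 = rep a1)) as [_|c]; [|exfalso; apply c; reflexivity].
    destruct (excluded_middle_informative (rep a2 = rep a1)) as [c|_]; [exfalso; apply ner; symmetry; exact c|].
    destruct (excluded_middle_informative (rep a2 = rep a2)) as [_|c]; [|exfalso; apply c; reflexivity].
    exact hq.
Qed.

Lemma le_of_sep {P Q : act S} (c1 : C1 P Q) (c2 : C2 P Q) :
  forall (X : Type) T p q, closure Q T p q -> closure P (X:=X) T p q.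
Proof.
  intros X T p q hc mu hmu hT. apply NNPP; intro hne.
  destruct (sep c1 c2 _ _ hne) as [phi [hphi hne2]]. apply hne2.
  apply (hc (fun x => phi (mu x))).
  - intros s x. cbv beta. rewrite hmu. apply hphi.
  - intros a b hab. cbv beta. rewrite (hT a b hab). reflexivity.
Qed.

Lemma geq_of {P Q : act S} : C1 P Q -> C1 Q P -> C2 P Q -> C2 Q P -> geom_equiv P Q.
Proof.
  intros a c b d X _ _ T p q. split.
  - apply le_of_sep; assumption.
  - apply le_of_sep; assumption.
Qed.

End LeSep.

Section Blocks.
Context {S : Group}.

Lemma aop_inl {P Q : act S} s (x : P) : aop (a0 := act_sum P Q) s (inl x) = inl (aop s x).
Proof. reflexivity. Qed.
Lemma aop_inr {P Q : act S} s (x : Q) : aop (a0 := act_sum P Q) s (inr x) = inr (aop s x).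
Proof. reflexivity. Qed.

Lemma exact_inl {P Q : act S} H (x : P) : exactp (P:=act_sum P Q) H (inl x) <-> exactp H x.
Proof.
  unfold exactp. split; intros h s; rewrite (h s), aop_inl; split; intro e;
    try (injection e; auto); try (rewrite e; reflexivity).
Qed.
Lemma exact_inr {P Q : act S} H (x : Q) : exactp (P:=act_sum P Q) H (inr x) <-> exactp H x.
Proof.
  unfold exactp. split; intros h s; rewrite (h s), aop_inr; split; intro e;
    try (injection e; auto); try (rewrite e; reflexivity).
Qed.

Lemma Ex_sum {P Q : act S} H : Ex (act_sum P Q) H <-> Ex P H \/ Ex Q H.
Proof.
  split.
  - intros [[x|x] hx]; [left|right]; exists x.
    + apply (exact_inl (Q:=Q)); exact hx.
    + apply (exact_inr (P:=P)); exact hx.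
  - intros [[x hx]|[x hx]].
    + exists (inl x). apply exact_inl; exact hx.
    + exists (inr x). apply exact_inr; exact hx.
Qed.

Lemma Dx_sum_inv {P Q : act S} H : Dx (act_sum P Q) H -> Dx P H \/ Dx Q H \/ (Ex P H /\ Ex Q H).
Proof.
  intros [q1 [q2 [h1 [h2 hd]]]].
  destruct q1 as [x1|x1]; destruct q2 as [x2|x2].
  - left. exists x1, x2. split; [|split].
    + apply (exact_inl (Q:=Q)); exact h1.
    + apply (exact_inl (Q:=Q)); exact h2.
    + intros g e. apply (hd g). rewrite aop_inl, e. reflexivity.
  - right; right. split; [exists x1; apply (exact_inl (Q:=Q)); exact h1|exists x2; apply (exact_inr (P:=P)); exact h2].
  - right; right. split; [exists x2; apply (exact_inl (Q:=Q)); exact h2|exists x1; apply (exact_inr (P:=P)); exact h1].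
  - right; left. exists x1, x2. split; [|split].
    + apply (exact_inr (P:=P)); exact h1.
    + apply (exact_inr (P:=P)); exact h2.
    + intros g e. apply (hd g). rewrite aop_inr, e. reflexivity.
Qed.

Lemma Dx_sum_lr {P Q : act S} H : Ex P H -> Ex Q H -> Dx (act_sum P Q) H.
Proof.
  intros [x hx] [y hy]. exists (inl x), (inr y). split; [|split].
  - apply exact_inl; exact hx.
  - apply exact_inr; exact hy.
  - intros g e. rewrite aop_inl in e. discriminate e.
Qed.

Lemma Dx_sum_l {P Q : act S} H : Dx P H -> Dx (act_sum P Q) H.
Proof.
  intros [x1 [x2 [h1 [h2 hd]]]]. exists (inl x1), (inl x2). split; [|split].
  - apply exact_inl; exact h1.
  - apply exact_inl; exact h2.
  - intros g e. rewrite aop_inl in e. injection e. apply hd.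
Qed.

Lemma aop_sig {I : Type} (F : I -> act S) s i (x : F i) :
  aop (a0 := act_coprod F) s (existT _ i x) = existT _ i (aop s x).
Proof. reflexivity. Qed.

Lemma exact_sig {I : Type} (F : I -> act S) H i (x : F i) :
  exactp (P:=act_coprod F) H (existT _ i x) <-> exactp H x.
Proof.
  unfold exactp. split; intros h s; rewrite (h s), aop_sig; split; intro e.
  - apply inj_pairT2 in e. exact e.
  - rewrite e. reflexivity.
  - rewrite e. reflexivity.
  - apply inj_pairT2 in e. exact e.
Qed.

Lemma Ex_sig {I : Type} (F : I -> act S) H : Ex (act_coprod F) H <-> exists i, Ex (F i) H.
Proof.
  split.
  - intros [[i x] hx]. exists i, x. apply (exact_sig F); exact hx.
  - intros [i [x hx]]. exists (existT _ i x). apply exact_sig; exact hx.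
Qed.

Lemma Dx_sig_inv {I : Type} (F : I -> act S) H : Dx (act_coprod F) H ->
  (exists i, Dx (F i) H) \/ (exists i i', i <> i' /\ Ex (F i) H /\ Ex (F i') H).
Proof.
  intros [[i x] [[i' y] [h1 [h2 hd]]]].
  apply exact_sig in h1. apply exact_sig in h2.
  destruct (classic (i = i')) as [e|ne].
  - subst i'. left. exists i, x, y. split; [exact h1|split; [exact h2|]].
    intros g e. apply (hd g). rewrite aop_sig, e. reflexivity.
  - right. exists i, i'. split; [exact ne|split; [exists x; exact h1|exists y; exact h2]].
Qed.

Lemma Dx_sig_in {I : Type} (F : I -> act S) H i : Dx (F i) H -> Dx (act_coprod F) H.
Proof.
  intros [x [y [h1 [h2 hd]]]]. exists (existT _ i x), (existT _ i y).
  split; [apply exact_sig; exact h1|split; [apply exact_sig; exact h2|]].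
  intros g e. rewrite aop_sig in e. apply inj_pairT2 in e. apply (hd g e).
Qed.

Lemma Ex_sub {I : Type} (P : I -> Prop) (F : I -> act S) H :
  Ex (sub_coprod P F) H <-> exists i, P i /\ Ex (F i) H.
Proof.
  unfold sub_coprod. rewrite Ex_sig. split.
  - intros [[i pi] h]. exists i. split; assumption.
  - intros [i [pi h]]. exists (exist _ i pi). exact h.
Qed.

Lemma Dx_sub_inv {I : Type} (P : I -> Prop) (F : I -> act S) H : Dx (sub_coprod P F) H ->
  (exists i, P i /\ Dx (F i) H) \/
  (exists i i', P i /\ P i' /\ i <> i' /\ Ex (F i) H /\ Ex (F i') H).
Proof.
  unfold sub_coprod. intro h. apply Dx_sig_inv in h.
  destruct h as [[[i pi] h]|[[i pi] [[i' pi'] [ne [h1 h2]]]]].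
  - left. exists i. split; assumption.
  - right. exists i, i'. split; [exact pi|split; [exact pi'|split; [|split; assumption]]].
    intro e. apply ne. subst i'. apply subset_eq_compat. reflexivity.
Qed.

Lemma Dx_sub_in {I : Type} (P : I -> Prop) (F : I -> act S) H i :
  P i -> Dx (F i) H -> Dx (sub_coprod P F) H.
Proof.
  intros pi h. unfold sub_coprod. apply (Dx_sig_in _ _ (exist _ i pi)). exact h.
Qed.

Lemma Ex_point H : Ex (act_point S) H <-> forall s, H s.
Proof.
  split.
  - intros [q hq] s. apply hq. destruct q. reflexivity.
  - intro h. exists tt. intro s. split; intro; [reflexivity|apply h].
Qed.

Lemma Dx_point H : Dx (act_point S) H -> False.
Proof.
  intros [q1 [q2 [_ [_ hd]]]]. apply (hd gone). destruct q1, q2. reflexivity.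
Qed.

End Blocks.

Section Cosets.
Context {S : Group}.

Lemma sg1 {H : S -> Prop} : subgroup H -> H gone.
Proof. intros [a _]; exact a. Qed.
Lemma sgM {H : S -> Prop} : subgroup H -> forall x y, H x -> H y -> H (gmul x y).
Proof. intros [_ [a _]]; exact a. Qed.
Lemma sgV {H : S -> Prop} : subgroup H -> forall x, H x -> H (ginv x).
Proof. intros [_ [_ a]]; exact a. Qed.

Lemma coset_eq {G0 : S -> Prop} (C1 C2 : coset_car S G0) :
  (forall x, proj1_sig C1 x <-> proj1_sig C2 x) -> C1 = C2.
Proof.
  destruct C1 as [c1 p1], C2 as [c2 p2]. simpl. intro h. apply subset_eq_compat.
  apply functional_extensionality; intro x. apply propositional_extensionality. apply h.
Qed.

Lemma coset_op_val (G0 : S -> Prop) s (C : coset_car S G0) x :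
  proj1_sig (aop (a0:=coset_act G0) s C) x <-> proj1_sig C (gmul (ginv s) x).
Proof. destruct C as [c [t ht]]. simpl. tauto. Qed.

Lemma cos_iff (G0 : S -> Prop) (hG0 : subgroup G0) t s :
  (forall x, G0 (gmul (ginv t) (gmul (ginv s) x)) <-> G0 (gmul (ginv t) x)) <->
  G0 (gmul (gmul (ginv t) s) t).
Proof.
  split.
  - intro h. specialize (h t). assert (h1 : G0 (gmul (ginv t) t)) by (rewrite gmulVl; apply sg1; exact hG0).
    apply h in h1. apply (sgV hG0) in h1. revert h1. gsimpl. tauto.
  - intros hu x. split; intro h.
    + pose proof (sgM hG0 _ _ hu h) as h2. revert h2. gsimpl. tauto.
    + pose proof (sgM hG0 _ _ (sgV hG0 _ hu) h) as h2. revert h2. gsimpl. tauto.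
Qed.

Lemma coset_stab (G0 : S -> Prop) (hG0 : subgroup G0) (C : coset_car S G0) t
  (ht : forall x, proj1_sig C x <-> G0 (gmul (ginv t) x)) s :
  aop (a0:=coset_act G0) s C = C <-> G0 (gmul (gmul (ginv t) s) t).
Proof.
  rewrite <- cos_iff by exact hG0. split.
  - intros e x. rewrite <- !ht. rewrite <- (coset_op_val G0 s C x). rewrite e. tauto.
  - intro h. apply coset_eq. intro x. rewrite coset_op_val, !ht. apply h.
Qed.

Definition mkcos (G0 : S -> Prop) (t : S) : coset_car S G0 :=
  exist _ (fun x => G0 (gmul (ginv t) x)) (ex_intro _ t (fun x => iff_refl _)).

Lemma Ex_coset (G0 : S -> Prop) (hG0 : subgroup G0) H :
  Ex (coset_act G0) H <-> conjugate H G0.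
Proof.
  split.
  - intros [C hC]. destruct (proj2_sig C) as [t ht]. exists t. intro x.
    rewrite (hC x). apply coset_stab; assumption.
  - intros [g hg]. exists (mkcos G0 g). intro s. rewrite hg.
    rewrite (coset_stab G0 hG0 (mkcos G0 g) g); [tauto|]. intro x. simpl. tauto.
Qed.

Lemma Dx_coset (G0 : S -> Prop) H : Dx (coset_act G0) H -> False.
Proof.
  intros [C1 [C2 [_ [_ hd]]]].
  destruct (proj2_sig C1) as [t1 ht1]. destruct (proj2_sig C2) as [t2 ht2].
  apply (hd (gmul t2 (ginv t1))). apply coset_eq. intro x.
  rewrite coset_op_val, ht1, ht2. gsimpl. tauto.
Qed.

Lemma conj_full_false (G0 H : S -> Prop) : proper G0 -> (forall s, H s) -> conjugate H G0 -> False.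
Proof.
  intros [y hy] hH [g hg]. apply hy.
  pose proof (proj1 (hg (gmul (gmul g y) (ginv g))) (hH _)) as h. revert h. gsimpl. tauto.
Qed.

Lemma Ecos_full (G0 H : S -> Prop) : subgroup G0 -> proper G0 -> (forall s, H s) ->
  Ex (coset_act G0) H -> False.
Proof.
  intros hs hp hH hE. apply Ex_coset in hE; [|exact hs]. exact (conj_full_false _ _ hp hH hE).
Qed.

Lemma conj_normal (H G0 : S -> Prop) : conjugate H G0 -> normal H -> normal G0.
Proof.
  intros [k hk] hn g y hy.
  assert (h1 : H (gmul (gmul k y) (ginv k))) by (apply hk; gsimpl; exact hy).
  pose proof (hn (gmul (gmul k g) (ginv k)) _ h1) as h2. apply hk in h2. revert h2. gsimpl. tauto.
Qed.

Lemma normal_same (H H' : S -> Prop) : normal H -> same_set H H' -> normal H'.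
Proof. intros hn hs g y hy. apply hs. apply hn. apply hs. exact hy. Qed.

Lemma conj_normal_same (H G0 : S -> Prop) : conjugate H G0 -> normal G0 -> same_set H G0.
Proof.
  intros [k hk] hn x. rewrite hk. split; intro h.
  - pose proof (hn k _ h) as h2. revert h2. gsimpl. tauto.
  - pose proof (hn (ginv k) _ h) as h2. revert h2. gsimpl. tauto.
Qed.

Lemma conj_proper (H G0 : S -> Prop) : conjugate H G0 -> proper G0 -> proper H.
Proof.
  intros [k hk] [y hy]. exists (gmul (gmul k y) (ginv k)). rewrite hk. gsimpl. exact hy.
Qed.

End Cosets.

Section Main.
Context {S : Group} {J : Type} (G : J -> S -> Prop) {M : Type} (N : M -> S -> Prop)
  (hG : forall j, subgroup (G j) /\ proper (G j) /\ ~ normal (G j))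
  (hGrep : forall H : S -> Prop, subgroup H -> proper H -> ~ normal H ->
             exists! j, conjugate H (G j))
  (hN : forall m, subgroup (N m) /\ proper (N m) /\ normal (N m))
  (hNall : forall H : S -> Prop, subgroup H -> proper H -> normal H ->
             exists! m, same_set H (N m)).

Definition cosG := fun j => coset_act (G j).
Definition cosN := fun m => coset_act (N m).

Lemma EG_conj H j : Ex (cosG j) H <-> conjugate H (G j).
Proof. apply Ex_coset. apply hG. Qed.
Lemma EN_conj H m : Ex (cosN m) H <-> conjugate H (N m).
Proof. apply Ex_coset. apply hN. Qed.

Lemma uniqG H i i' : subgroup H -> Ex (cosG i) H -> Ex (cosG i') H -> i = i'.
Proof.
  intros hs h1 h2. apply EG_conj in h1. apply EG_conj in h2.
  destruct (hG i) as [_ [hp hnn]].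
  destruct (hGrep H hs (conj_proper _ _ h1 hp)) as [j [_ uj]].
  - intro hn. apply hnn. exact (conj_normal _ _ h1 hn).
  - rewrite <- (uj i h1). apply uj. exact h2.
Qed.

Lemma uniqN H m m' : subgroup H -> Ex (cosN m) H -> Ex (cosN m') H -> m = m'.
Proof.
  intros hs h1 h2. apply EN_conj in h1. apply EN_conj in h2.
  destruct (hN m) as [_ [hp hn]]. destruct (hN m') as [_ [_ hn']].
  pose proof (conj_normal_same _ _ h1 hn) as s1.
  pose proof (conj_normal_same _ _ h2 hn') as s2.
  assert (hnH : normal H).
  { apply (normal_same (N m)); [exact hn|]. intro x. symmetry. apply s1. }
  destruct (hNall H hs (conj_proper _ _ h1 hp) hnH) as [k [_ uk]].
  rewrite <- (uk m s1). apply uk. exact s2.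
Qed.

Lemma crossGN H i m : Ex (cosG i) H -> Ex (cosN m) H -> False.
Proof.
  intros h1 h2. apply EG_conj in h1. apply EN_conj in h2.
  destruct (hN m) as [_ [_ hn]]. destruct (hG i) as [_ [_ hnn]].
  pose proof (conj_normal_same _ _ h2 hn) as s2.
  apply hnn. apply (conj_normal H); [exact h1|].
  apply (normal_same (N m)); [exact hn|]. intro x. symmetry. apply s2.
Qed.

Lemma EG_full H i : (forall s, H s) -> Ex (cosG i) H -> False.
Proof. intro hf. apply Ecos_full; [apply hG|apply hG|exact hf]. Qed.
Lemma EN_full H m : (forall s, H s) -> Ex (cosN m) H -> False.
Proof. intro hf. apply Ecos_full; [apply hN|apply hN|exact hf]. Qed.

Lemma classify H : subgroup H ->
  (forall s, H s) \/ (exists m, same_set H (N m)) \/ (exists j, conjugate H (G j)).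
Proof.
  intro hs. destruct (classic (proper H)) as [hp|hp].
  - destruct (classic (normal H)) as [hn|hn].
    + right; left. destruct (hNall H hs hp hn) as [m [hm _]]. exists m; exact hm.
    + right; right. destruct (hGrep H hs hp hn) as [j [hj _]]. exists j; exact hj.
  - left. intro s. apply NNPP. intro c. apply hp. exists s. exact c.
Qed.

Lemma not_full_proper (H : S -> Prop) : ~ (forall s, H s) -> proper H.
Proof. intro h. apply NNPP. intro c. apply h. intro s. apply NNPP. intro c2. apply c. exists s. exact c2. Qed.

Lemma DsubG_false (P : J -> Prop) H : subgroup H -> Dx (sub_coprod P cosG) H -> False.
Proof.
  intros hs h. apply Dx_sub_inv in h.
  destruct h as [[i [_ h]]|[i [i' [_ [_ [ne [h1 h2]]]]]]].
  - exact (Dx_coset _ _ h).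
  - apply ne. exact (uniqG H i i' hs h1 h2).
Qed.

Lemma DsubN_false (P : M -> Prop) H : subgroup H -> Dx (sub_coprod P cosN) H -> False.
Proof.
  intros hs h. apply Dx_sub_inv in h.
  destruct h as [[i [_ h]]|[i [i' [_ [_ [ne [h1 h2]]]]]]].
  - exact (Dx_coset _ _ h).
  - apply ne. exact (uniqN H i i' hs h1 h2).
Qed.

Variable A : act S.
Definition Full : S -> Prop := fun _ => True.

Lemma full_same H : (forall s, H s) -> same_set H Full.
Proof. intros h x. unfold Full. split; auto. Qed.

Definition KA : J -> Prop := fun j => Ex A (G j).
Definition LA : M -> Prop := fun m => Ex A (N m).
Definition core := act_sum (sub_coprod KA cosG) (sub_coprod LA cosN).

Lemma core_Ex H : Ex core H -> Ex A H.
Proof.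
  intro h. apply Ex_sum in h. destruct h as [h|h]; apply Ex_sub in h; destruct h as [i [hi h]].
  - apply EG_conj in h. exact (Ex_conj _ _ h hi).
  - apply EN_conj in h. exact (Ex_conj _ _ h hi).
Qed.

Lemma core_Ex_full H : (forall s, H s) -> Ex core H -> False.
Proof.
  intros hf h. apply Ex_sum in h. destruct h as [h|h]; apply Ex_sub in h; destruct h as [i [_ h]].
  - exact (EG_full H i hf h).
  - exact (EN_full H i hf h).
Qed.

Lemma core_Dx H : subgroup H -> Dx core H -> False.
Proof.
  intros hs h. apply Dx_sum_inv in h. destruct h as [h|[h|[h1 h2]]].
  - exact (DsubG_false _ H hs h).
  - exact (DsubN_false _ H hs h).
  - apply Ex_sub in h1. apply Ex_sub in h2. destruct h1 as [i [_ h1]]. destruct h2 as [m [_ h2]].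
    exact (crossGN H i m h1 h2).
Qed.

Lemma core_in H : subgroup H -> ~ (forall s, H s) -> Ex A H -> Ex core H.
Proof.
  intros hs hnf hE. destruct (classify H hs) as [hf|[[m hm]|[j hj]]].
  - contradiction.
  - apply Ex_sum. right. apply Ex_sub. exists m. split.
    + unfold LA. apply (Ex_ext H (N m)); [|exact hE]. intro x. symmetry. apply hm.
    + apply EN_conj. apply conj_same. exact hm.
  - apply Ex_sum. left. apply Ex_sub. exists j. split.
    + unfold KA. apply (Ex_conj H (G j)); [|exact hE]. apply conj_sym. exact hj.
    + apply EG_conj. exact hj.
Qed.

Lemma type_ii_ok : Ex A Full -> ~ Dx A Full -> geom_equiv A (act_type_ii G N KA LA).
Proof.
  intros hF1 hnF2. apply geq_of.
  - intros H hs hE. apply Ex_sum. destruct (classic (forall s, H s)) as [hf|hnf].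
    + right. apply Ex_point. exact hf.
    + left. apply core_in; assumption.
  - intros H hs hE. apply Ex_sum in hE. destruct hE as [hE|hE].
    + apply core_Ex. exact hE.
    + pose proof (proj1 (Ex_point H) hE) as hE0. clear hE. rename hE0 into hE. apply (Ex_ext Full H); [apply full_same; exact hE|exact hF1].
  - intros H hs hD. destruct (classic (forall s, H s)) as [hf|hnf].
    + exfalso. apply hnF2. apply (Dx_ext H Full); [|exact hD]. intro x. symmetry. apply full_same. exact hf.
    + right; left. split; [|apply not_full_proper; exact hnf].
      apply Ex_sum. right. apply Ex_point. intro; exact I.
  - intros H hs hD. destruct (classic (forall s, H s)) as [hf|hnf].
    + exfalso. apply Dx_sum_inv in hD. destruct hD as [h|[h|[h1 h2]]].
      * exact (core_Dx H hs h).
      * exact (Dx_point H h).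
      * exact (core_Ex_full H hf h1).
    + right; left. split; [exact hF1|apply not_full_proper; exact hnf].
Qed.

Lemma type_iii_ok : Dx A Full -> geom_equiv A (act_type_iii G N KA LA).
Proof.
  intros hF2. assert (hF1 : Ex A Full) by (apply Dx_Ex; exact hF2). apply geq_of.
  - intros H hs hE. apply Ex_sum. destruct (classic (forall s, H s)) as [hf|hnf].
    + right. apply Ex_point. exact hf.
    + left. apply Ex_sum. left. apply core_in; assumption.
  - intros H hs hE. apply Ex_sum in hE. destruct hE as [hE|hE].
    + apply Ex_sum in hE. destruct hE as [hE|hE].
      * apply core_Ex. exact hE.
      * pose proof (proj1 (Ex_point H) hE) as hE0. clear hE. rename hE0 into hE. apply (Ex_ext Full H); [apply full_same; exact hE|exact hF1].
    + pose proof (proj1 (Ex_point H) hE) as hE0. clear hE. rename hE0 into hE. apply (Ex_ext Full H); [apply full_same; exact hE|exact hF1].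
  - intros H hs hD. destruct (classic (forall s, H s)) as [hf|hnf].
    + left. apply Dx_sum_lr.
      * apply Ex_sum. right. apply Ex_point. exact hf.
      * apply Ex_point. exact hf.
    + right; left. split; [|apply not_full_proper; exact hnf].
      apply Ex_sum. right. apply Ex_point. intro; exact I.
  - intros H hs hD. destruct (classic (forall s, H s)) as [hf|hnf].
    + left. apply (Dx_ext Full H); [apply full_same; exact hf|exact hF2].
    + right; left. split; [exact hF1|apply not_full_proper; exact hnf].
Qed.

Definition KI : J -> Prop := fun j => Dx A (G j).
Definition TI : J -> Prop := fun j => Ex A (G j) /\ ~ Dx A (G j).
Definition cosG2 := fun j => act_double (coset_act (G j)).

Lemma Edouble H j : Ex (cosG2 j) H -> Ex (cosG j) H.
Proof. intro h. apply Ex_sum in h. destruct h; assumption. Qed.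

Lemma X_Ex (K T : J -> Prop) H :
  Ex (act_sum (sub_coprod K cosG2) (sub_coprod T cosG)) H ->
  exists i, (K i \/ T i) /\ Ex (cosG i) H.
Proof.
  intro h. apply Ex_sum in h. destruct h as [h|h]; apply Ex_sub in h; destruct h as [i [hi h]]; exists i.
  - split; [left; exact hi|apply Edouble; exact h].
  - split; [right; exact hi|exact h].
Qed.

Lemma type_i_ok : ~ Ex A Full -> geom_equiv A (act_type_i G N KI TI LA).
Proof.
  intros hnF1. apply geq_of.
  - intros H hs hE. destruct (classify H hs) as [hf|[[m hm]|[j hj]]].
    + exfalso. apply hnF1. apply (Ex_ext H Full); [|exact hE]. intro x. symmetry. apply full_same. exact hf.
    + apply Ex_sum. right. apply Ex_sub. exists m. split.
      * unfold LA. apply (Ex_ext H (N m)); [|exact hE]. intro x. symmetry. apply hm.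
      * apply EN_conj. apply conj_same. exact hm.
    + assert (hEj : Ex A (G j)) by (apply (Ex_conj H (G j)); [apply conj_sym; exact hj|exact hE]).
      apply Ex_sum. left. apply Ex_sum. destruct (classic (Dx A (G j))) as [hd|hd].
      * left. apply Ex_sub. exists j. split; [exact hd|]. apply Ex_sum. left. apply EG_conj. exact hj.
      * right. apply Ex_sub. exists j. split; [split; assumption|]. apply EG_conj. exact hj.
  - intros H hs hE. apply Ex_sum in hE. destruct hE as [hE|hE].
    + apply X_Ex in hE. destruct hE as [i [hi h]]. apply EG_conj in h.
      apply (Ex_conj _ _ h). destruct hi as [hi|[hi _]]; [apply Dx_Ex; exact hi|exact hi].
    + apply Ex_sub in hE. destruct hE as [i [hi h]]. apply EN_conj in h. exact (Ex_conj _ _ h hi).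
  - intros H hs hD. destruct (classify H hs) as [hf|[[m hm]|[j hj]]].
    + exfalso. apply hnF1. apply (Ex_ext H Full); [|apply Dx_Ex; exact hD]. intro x. symmetry. apply full_same. exact hf.
    + right; right. destruct (hN m) as [_ [hp hn]]. split.
      * apply (normal_same (N m)); [exact hn|]. intro x. symmetry. apply hm.
      * apply (conj_proper _ (N m)); [apply conj_same; exact hm|exact hp].
    + left. assert (hDj : Dx A (G j)) by (apply (Dx_conj H (G j)); [apply conj_sym; exact hj|exact hD]).
      apply Dx_sum_l. apply Dx_sum_l. apply (Dx_sub_in _ _ _ j hDj).
      apply Dx_sum_lr; apply EG_conj; exact hj.
  - intros H hs hD. left. apply Dx_sum_inv in hD. destruct hD as [h|[h|[h1 h2]]].
    + apply Dx_sum_inv in h. destruct h as [h|[h|[h1 h2]]].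
      * apply Dx_sub_inv in h. destruct h as [[i [hi h]]|[i [i' [_ [_ [ne [h1 h2]]]]]]].
        -- apply Dx_Ex in h. apply Edouble in h. apply EG_conj in h. exact (Dx_conj _ _ h hi).
        -- exfalso. apply ne. apply Edouble in h1. apply Edouble in h2. exact (uniqG H i i' hs h1 h2).
      * exfalso. exact (DsubG_false _ H hs h).
      * apply Ex_sub in h1. destruct h1 as [i [hi h]]. apply Edouble in h. apply EG_conj in h.
        exact (Dx_conj _ _ h hi).
    + exfalso. exact (DsubN_false _ H hs h).
    + exfalso. apply X_Ex in h1. destruct h1 as [i [_ h1]]. apply Ex_sub in h2. destruct h2 as [m [_ h2]].
      exact (crossGN H i m h1 h2).
Qed.


Definition fixedp {B : act S} (b : B) := forall s, aop s b = b.

Lemma fixed_Ex {B : act S} (b : B) : fixedp b -> Ex B Full.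
Proof. intro h. exists b. intro s. split; intro; [apply h|exact I]. Qed.

Lemma noFix_i (K T : J -> Prop) (L : M -> Prop) (b : act_type_i G N K T L) : ~ fixedp b.
Proof.
  intro hb. apply fixed_Ex in hb. apply Ex_sum in hb. destruct hb as [h|h].
  - apply X_Ex in h. destruct h as [i [_ h]]. exact (EG_full Full i (fun _ => I) h).
  - apply Ex_sub in h. destruct h as [m [_ h]]. exact (EN_full Full m (fun _ => I) h).
Qed.

Lemma noFix_core (K : J -> Prop) (L : M -> Prop)
  (b : act_sum (sub_coprod K cosG) (sub_coprod L cosN)) : ~ fixedp b.
Proof.
  intro hb. apply fixed_Ex in hb. apply Ex_sum in hb. destruct hb as [h|h];
    apply Ex_sub in h; destruct h as [i [_ h]].
  - exact (EG_full Full i (fun _ => I) h).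
  - exact (EN_full Full i (fun _ => I) h).
Qed.

Lemma fix_ii (K : J -> Prop) (L : M -> Prop) (b : act_type_ii G N K L) : fixedp b -> b = inr tt.
Proof.
  intro hb. destruct b as [b|[]]; [|reflexivity].
  exfalso. apply (noFix_core K L b). intro s. specialize (hb s). injection hb. auto.
Qed.

End Main.

Section Tests.
Context {S : Group}.

Definition hom_of {X : Type} {B : act S} (b : X -> B) : free_car S X -> B :=
  fun p => aop (snd p) (b (fst p)).

Lemma is_hom_of {X : Type} {B : act S} (b : X -> B) : is_hom B (hom_of b).
Proof. intros s p. unfold hom_of. simpl. apply aopM. Qed.

Lemma hom_val {X : Type} {B : act S} (mu : free_car S X -> B) :
  is_hom B mu -> forall x s, mu (x, s) = aop s (mu (x, gone)).
Proof. intros h x s. rewrite <- h. simpl. rewrite gmul1r. reflexivity. Qed.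

Definition T0 : free_car S bool -> free_car S bool -> Prop := fun _ _ => False.
Definition T2 : free_car S bool -> free_car S bool -> Prop :=
  fun a b => exists t, a = (false, t) /\ b = (false, gone).
Definition T3 : free_car S bool -> free_car S bool -> Prop :=
  fun a b => exists x t, a = (x, t) /\ b = (x, gone).

Lemma test1_false {B : act S} (c : B) s : aop s c <> c ->
  ~ closure B T0 (true, gone) (true, s).
Proof.
  intros hc h. apply hc. symmetry.
  pose proof (h (hom_of (fun _ => c)) (is_hom_of _) (fun a b f => False_ind _ f)) as e.
  unfold hom_of in e. simpl in e. rewrite aop1 in e. exact e.
Qed.

Lemma test1_inv {B : act S} s : ~ closure B T0 (true, gone) (true, s) ->
  exists d : B, aop s d <> d.
Proof.
  intro h. apply NNPP. intro c. apply h. intros mu hmu _.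
  rewrite (hom_val mu hmu true s). apply NNPP. intro c2. apply c.
  exists (mu (true, gone)). intro e. apply c2. symmetry. exact e.
Qed.

Lemma fixed_of_T2 {B : act S} (mu : free_car S bool -> B) : is_hom B mu ->
  (forall a b, T2 a b -> mu a = mu b) -> forall s, aop s (mu (false, gone)) = mu (false, gone).
Proof.
  intros hmu hT s. rewrite <- (hom_val mu hmu false s). apply hT. exists s. split; reflexivity.
Qed.

Lemma test2_true {B : act S} (hB : forall b : B, ~ (forall s, aop s b = b)) p q :
  closure B T2 p q.
Proof.
  intros mu hmu hT. exfalso. apply (hB (mu (false, gone))). apply fixed_of_T2; assumption.
Qed.

Lemma test2_false {B : act S} (z d : B) s : (forall t, aop t z = z) -> aop s d <> d ->
  ~ closure B T2 (true, gone) (true, s).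
Proof.
  intros hz hd h.
  pose proof (h (hom_of (fun x : bool => if x then d else z)) (is_hom_of _)) as e.
  apply hd. symmetry. unfold hom_of in e. simpl in e. rewrite aop1 in e. apply e.
  intros a b [t [ea eb]]. subst a b. unfold hom_of. simpl. rewrite aop1. apply hz.
Qed.

Lemma test3_true {B : act S}
  (hB : forall b b' : B, (forall s, aop s b = b) -> (forall s, aop s b' = b') -> b = b') :
  closure B T3 (false, gone) (true, gone).
Proof.
  intros mu hmu hT. apply hB; intro s.
  - rewrite <- (hom_val mu hmu false s). apply hT. exists false, s. split; reflexivity.
  - rewrite <- (hom_val mu hmu true s). apply hT. exists true, s. split; reflexivity.
Qed.

Lemma test3_false {B : act S} (z1 z2 : B) : (forall t, aop t z1 = z1) -> (forall t, aop t z2 = z2) ->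
  z1 <> z2 -> ~ closure B T3 (false, gone) (true, gone).
Proof.
  intros h1 h2 hne h. apply hne.
  pose proof (h (hom_of (fun x : bool => if x then z2 else z1)) (is_hom_of _)) as e.
  unfold hom_of in e. simpl in e. rewrite !aop1 in e. apply e.
  intros a b [x [t [ea eb]]]. subst a b. unfold hom_of. simpl. rewrite aop1.
  destruct x; [apply h2|apply h1].
Qed.

Lemma fin_bool : finite_type bool.
Proof. exists (true :: false :: nil). intros []; simpl; auto. Qed.

End Tests.

Theorem theorem3p21 (S : Group) (J : Type) (G : J -> S -> Prop)
  (M : Type) (N : M -> S -> Prop)
  (hG : forall j, subgroup (G j) /\ proper (G j) /\ ~ normal (G j))
  (hGrep : forall H : S -> Prop, subgroup H -> proper H -> ~ normal H ->
             exists! j, conjugate H (G j))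
  (hN : forall m, subgroup (N m) /\ proper (N m) /\ normal (N m))
  (hNall : forall H : S -> Prop, subgroup H -> proper H -> normal H ->
             exists! m, same_set H (N m))
  (A : act S) (hA : inhabited A) :
  (rep_type_i G N A \/ rep_type_ii G N A \/ rep_type_iii G N A) /\
  ~ (rep_type_i G N A /\ rep_type_ii G N A) /\
  ~ (rep_type_i G N A /\ rep_type_iii G N A) /\
  ~ (rep_type_ii G N A /\ rep_type_iii G N A).
Proof.
  assert (E1 := type_i_ok G N hG hGrep hN hNall A).
  assert (E2 := type_ii_ok G N hG hGrep hN hNall A).
  assert (E3 := type_iii_ok G N hG hGrep hN hNall A).
  assert (F1 := noFix_i G N hG hN).
  assert (F2 := fix_ii G N hG hN).
  assert (ib : inhabited bool) by exact (inhabits true).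
  split; [|split; [|split]].
  - destruct (classic (Dx A (Full (S:=S)))) as [h2|h2].
    + right; right. exists (KA G A), (LA N A). apply E3; exact h2.
    + destruct (classic (Ex A (Full (S:=S)))) as [h1|h1].
      * right; left. exists (KA G A), (LA N A). apply E2; assumption.
      * left. exists (KI G A), (TI G A), (LA N A). split; [intros j hk [_ ht]; exact (ht hk)|].
        assert (ge := E1 h1). split; [|exact ge].
        apply NNPP. intro hR. destruct hA as [a].
        destruct (not_all_ex_not _ _ (fun hf => h1 (fixed_Ex a hf))) as [s hs].
        apply (test1_false a s hs). apply (ge bool fin_bool ib).
        intros mu _ _. exfalso. apply hR. exact (inhabits (mu (true, gone))).
  - intros [[K [T [L [hd [[c] ge1]]]]] [K' [L' ge2]]].
    destruct (not_all_ex_not _ _ (F1 K T L c)) as [s hs].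
    pose proof (test1_false c s hs) as t1.
    assert (t1' : ~ closure (act_type_ii G N K' L') T0 (true, gone) (true, s)).
    { intro h. apply t1. apply (ge1 bool fin_bool ib). apply (ge2 bool fin_bool ib). exact h. }
    destruct (test1_inv s t1') as [d hd'].
    apply (test2_false (B:=act_type_ii G N K' L') (inr tt) d s (fun t => eq_refl) hd').
    apply (ge2 bool fin_bool ib). apply (ge1 bool fin_bool ib).
    apply test2_true. intros b hb. exact (F1 K T L b hb).
  - intros [[K [T [L [hd [_ ge1]]]]] [K' [L' ge3]]].
    apply (test3_false (B:=act_type_iii G N K' L') (inr tt) (inl (inr tt)) (fun t => eq_refl) (fun t => eq_refl)).
    + discriminate.
    + apply (ge3 bool fin_bool ib). apply (ge1 bool fin_bool ib).
      apply test3_true. intros b b' hb _. exfalso. exact (F1 K T L b hb).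
  - intros [[K [L ge2]] [K' [L' ge3]]].
    apply (test3_false (B:=act_type_iii G N K' L') (inr tt) (inl (inr tt)) (fun t => eq_refl) (fun t => eq_refl)).
    + discriminate.
    + apply (ge3 bool fin_bool ib). apply (ge2 bool fin_bool ib).
      apply test3_true. intros b b' hb hb'. rewrite (F2 K L b hb), (F2 K L b' hb'). reflexivity.
Qed.
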